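(* Let $n,k$ be integers with $1\le k$ and $n\ge k+2$. For real constants $c_0,\dots,c_{n-1}$ and an ordered bid vector $b_1\ge b_2\ge\dots\ge b_n\ge 0$, define for $i=1,\dots,n$ $$r_i=c_0+c_1b_1+\dots+c_{i-1}b_{i-1}+c_ib_{i+1}+\dots+c_{n-1}b_n.$$ Consider the optimization problem: maximize $f$ over $(f,c_0,\dots,c_{n-1})\in\mathbb{R}^{n+1}$ subject to, for every ordered bid vector $b_1\ge\dots\ge b_n\ge 0$: (i) $r_n\ge 0$; (ii) $\sum_{i=1}^n r_i\le k\,b_k$; (iii) $\sum_{i=1}^k r_i\ge f\cdot k\,b_{k+1}$. Then this problem has a unique optimal solution, namely $f^*=\frac{k}{n}$, $c_k^*=\frac{k}{n}$ and $c_i^*=0$ for all $i\ne k$. In particular the optimal worst-case fraction redistributed to the $k$ confirmed users is $k/n$, and the resulting mechanism (R-TFRM) is unique.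
   Context: Interpretation: in a block with $n$ included transactions whose bids are $b_1\ge\dots\ge b_n$, the top $k$ are confirmed and each pays $b_{k+1}$ minus the rebate $r_i$; included unconfirmed users pay $-r_i$. Constraint (i) encodes user individual rationality, (ii) an approximate miner individual rationality (total rebate at most $k\,b_k$), and (iii) that at least the fraction $f$ of the VCG payment $k\,b_{k+1}$ is returned to the confirmed users. *)

(* Defs.v *)
From mathcomp Require Import all_boot all_order all_algebra.
From mathcomp Require Import reals.
Set Implicit Arguments. Unset Strict Implicit. Unset Printing Implicit Defensive.
Import Order.TTheory GRing.Theory Num.Theory.
Local Open Scope ring_scope.

Section Defs.
Variable R : realType.

(* Bids are indexed 1..n (b : nat -> R, only b 1 .. b n matter);
   constants c 0 .. c (n-1) (c : nat -> R, only these indices matter). *)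

Definition rebate (n : nat) (c b : nat -> R) (i : nat) : R :=
  c 0%N + \sum_(1 <= j < i) c j * b j + \sum_(i <= j < n) c j * b j.+1.

Definition ordered_bids (n : nat) (b : nat -> R) : Prop :=
  (forall j, (1 <= j < n)%N -> b j.+1 <= b j) /\ 0 <= b n.

Definition feasible (n k : nat) (f : R) (c : nat -> R) : Prop :=
  forall b : nat -> R, ordered_bids n b ->
    [/\ 0 <= rebate n c b n,
        \sum_(1 <= i < n.+1) rebate n c b i <= k%:R * b k
      & f * (k%:R * b k.+1) <= \sum_(1 <= i < k.+1) rebate n c b i].

Definition optimal (n k : nat) (f : R) (c : nat -> R) : Prop :=
  feasible n k f c /\ (forall f' c', feasible n k f' c' -> f' <= f).

Definition cstar (n k : nat) (i : nat) : R :=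
  if i == k then k%:R / n%:R else 0.

End Defs.

(* Main.v *)
Require Import Defs.
From mathcomp Require Import all_boot all_order all_algebra.
From mathcomp Require Import reals.
From mathcomp Require Import zify ring lra.
Import Order.TTheory GRing.Theory Num.Theory.
Local Open Scope ring_scope.

Lemma sum_delta (R : realType) (a b k : nat) (F : nat -> R) :
  \sum_(a <= j < b) (if j == k then F j else 0) = if (a <= k < b)%N then F k else 0.
Proof.
elim: b => [|b IH]; first by rewrite big_geq // ltn0 andbF.
case: (leqP a b) => hab.
- rewrite big_nat_recr //= IH.
  case: (eqVneq b k) => [<-|hbk].
  + by rewrite ltnn andbF add0r hab ltnSn.
  + by rewrite addr0 ltnS [(k <= b)%N]leq_eqVlt (eq_sym k) (negbTE hbk).
- rewrite big_geq //; case: ifP => // /andP [h1 h2]; exfalso; lia.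
Qed.

Lemma sum_ite (R : realType) (N m : nat) (A B : R) : (m <= N)%N ->
  \sum_(1 <= i < N.+1) (if (i <= m)%N then A else B) = m%:R * A + (N - m)%:R * B.
Proof.
move=> hm.
rewrite (big_cat_nat _ (n:=m.+1)) //=; try lia.
rewrite (eq_big_nat _ _ (F2 := fun _ => A)); last by move=> i /andP[_]; rewrite ltnS => ->.
rewrite [X in _ + X](eq_big_nat _ _ (F2 := fun _ => B)); last first.
  by move=> i /andP[h _]; rewrite leqNgt h.
by rewrite !sumr_const_nat subSS subn0 !mulr_natl.
Qed.

Lemma ord_mono (R : realType) (n : nat) (b : nat -> R) : ordered_bids n b ->
  forall d j, (1 <= j)%N -> (j + d = n)%N -> b n <= b j.
Proof.
move=> [hb _]; elim=> [|d IH] j h1 h2.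
  by rewrite addn0 in h2; rewrite h2.
apply: le_trans (IH j.+1 _ _) _; [by [] | lia |].
apply: hb; lia.
Qed.

Definition ee (R : realType) (m : nat) : nat -> R := fun j => if (j <= m)%N then 1 else 0.

Lemma ee_ord (R : realType) n m : ordered_bids n (ee R m).
Proof.
split; last by rewrite /ee; case: ifP.
move=> j _; rewrite /ee; case: ifP; case: ifP => //; try lia.
 
Qed.

Definition Q {R : realType} (c : nat -> R) (m : nat) := \sum_(1 <= j < m) c j.

Lemma rebate_ee (R : realType) n c m i : (m <= n)%N -> (1 <= i <= n)%N ->
  rebate n c (ee R m) i = if (i <= m)%N then c 0%N + Q c m else c 0%N + Q c m.+1.
Proof.
move=> hm /andP[hi1 hi2].
transitivity (c 0%N + (if (i <= m)%N then Q c m else Q c m.+1)); last by case: ifP.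
rewrite /rebate /Q -addrA; congr (_ + _).
case: ifP => him.
- rewrite (eq_big_nat _ _ (F2 := c)); last first.
    by move=> j /andP[_ hj]; rewrite /ee ifT ?mulr1 //; lia.
  rewrite [X in _ + X](big_cat_nat _ (n:=m)) //=.
  rewrite [X in _ + (_ + X)]big1_seq ?addr0; last first.
    move=> j /andP[_]; rewrite mem_index_iota => /andP[hj _].
    by rewrite /ee ifF ?mulr0 //; lia.
  rewrite (eq_big_nat _ _ (F2 := c)); last first.
    by move=> j /andP[_ hj]; rewrite /ee ifT ?mulr1 //; lia.
  by rewrite -big_cat_nat.
- rewrite (big_cat_nat _ (n:=m.+1)) //=; try lia.
  rewrite (eq_big_nat _ _ (F2 := c)); last first.
    by move=> j /andP[_ hj]; rewrite /ee ifT ?mulr1 //; lia.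
  rewrite [X in _ + X + _]big1_seq ?addr0; last first.
    move=> j /andP[_]; rewrite mem_index_iota => /andP[hj _].
    by rewrite /ee ifF ?mulr0 //; lia.
  rewrite [X in _ + X]big1_seq ?addr0 //.
  move=> j /andP[_]; rewrite mem_index_iota => /andP[hj _].
  by rewrite /ee ifF ?mulr0 //; lia.
Qed.
Lemma rebate_cstar (R : realType) n k b i : (1 <= k < n)%N -> (1 <= i <= n)%N ->
  rebate n (cstar R n k) b i =
  if (i <= k)%N then k%:R / n%:R * b k.+1 else k%:R / n%:R * b k.
Proof.
move=> hk hi.
have E : forall (bb : nat -> R) j, cstar R n k j * bb j =
    if j == k then k%:R / n%:R * bb k else 0.
  by move=> bb j; rewrite /cstar; case: eqP => [->|_]; rewrite ?mul0r.
rewrite /rebate.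
rewrite (eq_bigr _ (fun j _ => E b j)).
rewrite (eq_bigr _ (fun j _ => E (fun j => b j.+1) j)) /=.
rewrite !sum_delta.
have -> : cstar R n k 0 = 0 by rewrite /cstar ifF //; apply/negbTE; rewrite eq_sym -lt0n; lia.
case: ifP; case: ifP; case: ifP => //; try lia; move=> *; rewrite ?add0r ?addr0 //.
Qed.

Lemma feas_ee (R : realType) n k f (c : nat -> R) m : feasible n k f c -> (m <= n)%N ->
  (1 <= n)%N ->
  [/\ 0 <= c 0%N + (if (n <= m)%N then Q c m else Q c m.+1),
      m%:R * (c 0%N + Q c m) + (n - m)%:R * (c 0%N + Q c m.+1) <= k%:R * ee R m k
    & (k <= m)%N -> f * (k%:R * ee R m k.+1) <= k%:R * (c 0%N + Q c m)].
Proof.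
move=> hf hm hn; have [h1 h2 h3] := hf _ (ee_ord R n m).
have hr := @rebate_ee R n c m _ hm.
split.
- by move: h1; rewrite hr ?leqnn ?hn //; case: ifP.
- rewrite -sum_ite //; apply: le_trans h2; rewrite le_eqVlt; apply/orP; left; apply/eqP.
  by apply: eq_big_nat => i hi; rewrite hr //.
- move=> hkm; apply: le_trans h3 _; rewrite le_eqVlt; apply/orP; left; apply/eqP.
  rewrite (eq_big_nat _ _ (F2 := fun _ => c 0%N + Q c m)).
    by rewrite sumr_const_nat subSS subn0 mulr_natl.
  move=> i hi; rewrite hr ?ifT //; lia.
Qed.
Lemma Q1 (R : realType) (c : nat -> R) : Q c 1 = 0.
Proof. by rewrite /Q big_geq. Qed.

Lemma QS (R : realType) (c : nat -> R) i : (1 <= i)%N -> Q c i.+1 = Q c i + c i.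
Proof. by move=> hi; rewrite /Q big_nat_recr. Qed.

Lemma cstar_feas (R : realType) n k : (1 <= k)%N -> (k + 2 <= n)%N ->
  feasible n k ((k%:R / n%:R) : R) (cstar R n k).
Proof.
move=> hk hn b hb.
have hr := @rebate_cstar R n k b.
have hn0 : (0 < n%:R :> R) by rewrite ltr0n; lia.
have ha : (k%:R / n%:R : R) * n%:R = k%:R by rewrite divfK // gt_eqF.
have ha0 : (0 <= k%:R / n%:R :> R) by rewrite divr_ge0 ?ler0n.
have hbk : b n <= b k by apply: (@ord_mono R n b hb (n - k) k); lia.
have hbn : 0 <= b n by case: hb.
have hb1 : b k.+1 <= b k by case: hb => hb _; apply: hb; lia.
split.
- rewrite hr ?ifF //; try lia. by apply: mulr_ge0 => //; apply: le_trans hbk.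
- rewrite (eq_big_nat _ _ (F2 := fun i => if (i <= k)%N then k%:R / n%:R * b k.+1 else k%:R / n%:R * b k)); last first.
    by move=> i hi; apply: hr; lia.
  rewrite sum_ite; last lia.
  rewrite natrB; last lia.
  set a := k%:R / n%:R in ha ha0 *.
  have hkr : (0 <= k%:R :> R) by [].
  have hd : 0 <= b k - b k.+1 by rewrite subr_ge0.
  have := mulr_ge0 (mulr_ge0 hkr ha0) hd.
  nra.
- rewrite (eq_big_nat _ _ (F2 := fun i => if (i <= k)%N then k%:R / n%:R * b k.+1 else k%:R / n%:R * b k)); last first.
    by move=> i hi; apply: hr; lia.
  rewrite sum_ite // subnn mul0r addr0 mulrCA; exact: lexx.
Qed.
Lemma feas_facts (R : realType) n k f (c : nat -> R) : (1 <= k)%N -> (k + 2 <= n)%N ->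
  feasible n k f c ->
  [/\ c 0%N = 0,
      forall m, (1 <= m <= n)%N -> 0 <= Q c m,
      forall m, (k < m <= n)%N -> f <= Q c m,
      forall m, (m <= n)%N -> m%:R * Q c m + (n - m)%:R * Q c m.+1 <= k%:R * ee R m k
    & f <= k%:R / n%:R].
Proof.
move=> hk hn hf.
have hn1 : (1 <= n)%N by lia.
have hn0 : (0 < n%:R :> R) by rewrite ltr0n; lia.
have hk0 : (0 < k%:R :> R) by rewrite ltr0n; lia.
have c00 : c 0%N = 0.
  have [h1 h2 _] := @feas_ee R n k f c 0 hf (leq0n n) hn1.
  move: h1 h2; rewrite Q1 ifF; last lia.
  rewrite /ee ifF; last lia.
  rewrite mul0r add0r subn0 !addr0 mulr0 => h1 h2.
  apply/eqP; rewrite eq_le h1 andbT.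
  by rewrite -(pmulr_rle0 _ hn0).
have Qpos : forall m, (1 <= m <= n)%N -> 0 <= Q c m.
  case=> [|m] hm; first lia.
  case: m hm => [|m] hm; first by rewrite Q1.
  have [h1 _ _] := @feas_ee R n k f c m.+1 hf (ltnW (proj2 (andP hm))) hn1.
  by move: h1; rewrite ifF ?c00 ?add0r //; lia.
have Qf : forall m, (k < m <= n)%N -> f <= Q c m.
  move=> m hm; have [_ _ h3] := @feas_ee R n k f c m hf (proj2 (andP hm)) hn1.
  move: (h3 (ltnW (proj1 (andP hm)))); rewrite /ee ifT ?c00 ?add0r ?mulr1; last lia.
  by rewrite mulrC ler_pM2l.
have Qii : forall m, (m <= n)%N -> m%:R * Q c m + (n - m)%:R * Q c m.+1 <= k%:R * ee R m k.
  move=> m hm; have [_ h2 _] := @feas_ee R n k f c m hf hm hn1.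
  by move: h2; rewrite c00 !add0r.
split => //.
have := Qii n (leqnn n); rewrite subnn mul0r addr0 /ee ifT ?mulr1; last lia.
have := Qf n; rewrite leqnn andbT => /(_ (ltac:(lia))) hfn hnq.
rewrite ler_pdivlMr //; apply: le_trans hnq; rewrite mulrC ler_pM2l //.
Qed.

Theorem theorem4 (R : realType) (n k : nat) :
  (1 <= k)%N -> (k + 2 <= n)%N ->
  optimal n k ((k%:R / n%:R) : R) (cstar R n k) /\
  (forall (f : R) (c : nat -> R), optimal n k f c ->
     f = k%:R / n%:R /\ (forall i, (i < n)%N -> c i = cstar R n k i)).
Proof.
move=> hk hn.
have hF := @cstar_feas R n k hk hn.
split.
  by split => // f c hf; have [_ _ _ _] := @feas_facts R n k _ _ hk hn hf.
move=> f c [hf hopt].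
have [c00 Qpos Qf Qii hfle] := @feas_facts R n k _ _ hk hn hf.
have hfe : f = k%:R / n%:R by apply/eqP; rewrite eq_le hfle (hopt _ _ hF).
split => //.
have hn0 : (0 < n%:R :> R) by rewrite ltr0n; lia.
have ha : (k%:R / n%:R : R) * n%:R = k%:R by rewrite divfK // gt_eqF.
set a := k%:R / n%:R in ha hfe.
subst f.
have QV : forall j, (1 <= j <= n)%N -> Q c j = if (j <= k)%N then 0 else a.
  move=> j hj; case: ifP => hjk.
  - case: j hj hjk => [|m] hj hjk; first lia.
    case: m hj hjk => [|m] hj hjk; first by rewrite Q1.
    have := Qii m.+1 (ltnW (proj2 (andP hj))).
    rewrite /ee ifF; last lia.
    rewrite mulr0 natrB; last lia.
    have h1 := Qpos m.+1 (ltac:(lia)).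
    have h2 := Qpos m.+2 hj.
    have h3 : (0 < n%:R - m.+1%:R :> R) by rewrite subr_gt0 ltr_nat; lia.
    have h4 : (0 <= m.+1%:R :> R) by [].
    move=> h; apply/eqP; rewrite eq_le h2 andbT.
    nra.
  - have hge := Qf j (ltac:(lia)).
    apply/eqP; rewrite eq_le hge andbT.
    case: (ltngtP j n) => hjn; [ | lia | ].
    + have := Qii j (ltnW hjn); rewrite /ee ifT ?mulr1; last lia.
      rewrite natrB; last lia.
      have h2 := Qf j.+1 (ltac:(lia)).
      have h3 : (0 < n%:R - j%:R :> R) by rewrite subr_gt0 ltr_nat.
      have h4 : (0 < j%:R :> R) by rewrite ltr0n; lia.
      move=> h; nra.
    + subst j; have := Qii n (leqnn n); rewrite subnn mul0r addr0 /ee ifT ?mulr1; last lia.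
      by move=> h; rewrite ler_pdivlMr // mulrC.
move=> i hi; case: i hi => [|i] hi.
  by rewrite c00 /cstar ifF //; apply/negbTE; rewrite eq_sym -lt0n.
have := @QS R c i.+1 (ltn0Sn i); rewrite !QV; try lia.
rewrite /cstar; case: (ltngtP i.+1 k) => h.
- by rewrite add0r => <-.
- by move=> e; apply: (@addrI _ a); rewrite addr0 -e.
- by rewrite add0r => <-.
Qed.
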